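(* Let $N$ and $\tilde{N}$ be real symmetric matrices and $\epsilon\ge0$. If $I-\tilde{N}\approx_{\epsilon}I-N$ and $N$ is positive semidefinite, then $I+\tilde{N}\approx_{\epsilon}I+N$.
   Context: For real symmetric $X,Y$ and $\epsilon\ge0$, $X\approx_\epsilon Y$ means $(1-\epsilon)v^TYv\le v^TXv\le(1+\epsilon)v^TYv$ for all vectors $v$. *)

(* Defs.v *)
From HB Require Import structures.
From mathcomp Require Import all_boot all_order all_algebra.
Set Implicit Arguments. Unset Strict Implicit. Unset Printing Implicit Defensive.
Import Order.TTheory GRing.Theory Num.Theory.
Local Open Scope ring_scope.

Definition qform (R : realFieldType) (n : nat) (X : 'M[R]_n) (v : 'cV[R]_n) : R :=
  (v^T *m X *m v) 0 0.

Definition is_symmetric (R : realFieldType) (n : nat) (X : 'M[R]_n) : Prop :=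
  X^T = X.

Definition is_psd (R : realFieldType) (n : nat) (X : 'M[R]_n) : Prop :=
  forall v : 'cV[R]_n, 0 <= qform X v.

Definition approx_eps (R : realFieldType) (n : nat) (eps : R) (X Y : 'M[R]_n) : Prop :=
  forall v : 'cV[R]_n,
    (1 - eps) * qform Y v <= qform X v /\ qform X v <= (1 + eps) * qform Y v.

(* Main.v *)
Require Import Defs.
From HB Require Import structures.
From mathcomp Require Import all_boot all_order all_algebra.
From mathcomp Require Import lra.
Import Order.TTheory GRing.Theory Num.Theory.
Local Open Scope ring_scope.

Lemma qformD (R : realFieldType) (n : nat) (X Y : 'M[R]_n) v :
  qform (X + Y) v = qform X v + qform Y v.
Proof. by rewrite /qform mulmxDr mulmxDl mxE. Qed.

Lemma qformB (R : realFieldType) (n : nat) (X Y : 'M[R]_n) v :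
  qform (X - Y) v = qform X v - qform Y v.
Proof. rewrite qformD /qform mulmxN mulNmx; congr (_ + _); by rewrite mxE. Qed.

Theorem claim1 (R : realFieldType) (n : nat) (N Nt : 'M[R]_n) (eps : R) :
  is_symmetric N -> is_symmetric Nt -> 0 <= eps ->
  approx_eps eps (1%:M - Nt) (1%:M - N) -> is_psd N ->
  approx_eps eps (1%:M + Nt) (1%:M + N).
Proof.
move=> _ _ he H hN v.
have := H v; rewrite !qformB !qformD => -[h1 h2].
have hb := hN v.
move: h1 h2 hb.
rewrite /qform.
move: ((v^T *m 1%:M *m v) 0 0) ((v^T *m N *m v) 0 0) ((v^T *m Nt *m v) 0 0) => a b c h1 h2 hb.
have hp : 0 <= eps * b by apply: mulr_ge0.
split; nra.
Qed.
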